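(* For all $f,g\in\mathcal B_1(2^\omega)$, $f\le_{\mathbf{tt1}} g$ if and only if $|f|_\alpha\le|g|_\alpha$.
   Context: $\mathcal B_1(2^\omega)$: functions $2^\omega\to\mathbb R$ that are pointwise limits of sequences of continuous functions. Optimal derivation sequence: for $\mathcal C\subseteq\mathcal P(X)$, $X$ a compact metric space, define $P^0=X$, $P^{\nu+1}=P^\nu\setminus\bigcup\{U\subseteq X \text{ open}: P^\nu\cap U\subseteq C\text{ for some }C\in\mathcal C\}$, and $P^\lambda=\bigcap_{\nu<\lambda}P^\nu$ for limit $\lambda$. Bourgain rank: for $f\in\mathcal B_1(2^\omega)$, $p\in\mathbb Q$, $\varepsilon\in\mathbb Q^+$, let $P^\nu_{f,p,\varepsilon}$ be the optimal derivation sequence for $\{f^{-1}((-\infty,p+\varepsilon)),f^{-1}((p-\varepsilon,\infty))\}$, let $\alpha(f,p,\varepsilon)$ be the least $\nu$ with $P^\nu_{f,p,\varepsilon}=\emptyset$, and $|f|_\alpha=\sup_{p,\varepsilon}\alpha(f,p,\varepsilon)$. Questions: for $y\in\mathbb R$, $p\in\mathbb Q$, $\varepsilon\in\mathbb Q^+$, a bit $b\in\{0,1\}$ is a correct answer to ''$y\lesssim_\varepsilon p$'' if either $b=1$ and $y<p+\varepsilon$, or $b=0$ and $y>p-\varepsilon$. $f\le_{\mathbf{tt1}} g$ means: for every $p\in\mathbb Q,\varepsilon\in\mathbb Q^+$ there are a continuous $k:2^\omega\to2^\omega$, $q\in\mathbb Q$, $\delta\in\mathbb Q^+$, $r\in\omega$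 and $h:2^{r+1}\to\{0,1\}$ such that for every $A\in2^\omega$, if $b$ is a correct answer to $g(k(A))\lesssim_\delta q$ then $h(A\upharpoonright r,b)$ is a correct answer to $f(A)\lesssim_\varepsilon p$. *)

(* Defs.v *)
From Stdlib Require Import Reals QArith Qreals List.
Open Scope R_scope.

Definition Cantor := nat -> bool.

Definition agree (n : nat) (x y : Cantor) : Prop :=
  forall i, (i < n)%nat -> x i = y i.

Definition is_open (U : Cantor -> Prop) : Prop :=
  forall x, U x -> exists n, forall y, agree n x y -> U y.

Definition cont_R (f : Cantor -> R) : Prop :=
  forall x (e : R), 0 < e -> exists n, forall y, agree n x y -> Rabs (f y - f x) < e.

Definition cont_C (k : Cantor -> Cantor) : Prop :=
  forall x m, exists n, forall y, agree n x y -> agree m (k x) (k y).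

Definition Baire1 (f : Cantor -> R) : Prop :=
  exists fn : nat -> Cantor -> R,
    (forall n, cont_R (fn n)) /\ (forall x, Un_cv (fun n => fn n x) (f x)).

(** Countable ordinals as Brouwer trees; [OL h] denotes sup_n h n. *)
Inductive Ord : Type :=
| OZ : Ord
| OS : Ord -> Ord
| OL : (nat -> Ord) -> Ord.

Inductive ord_le : Ord -> Ord -> Prop :=
| le_Z : forall b, ord_le OZ b
| le_S : forall a b, ord_lt a b -> ord_le (OS a) b
| le_L : forall h b, (forall n, ord_le (h n) b) -> ord_le (OL h) b
with ord_lt : Ord -> Ord -> Prop :=
| lt_S : forall a b, ord_le a b -> ord_lt a (OS b)
| lt_L : forall a h n, ord_lt a (h n) -> ord_lt a (OL h).

Definition deriv_step (C : (Cantor -> Prop) -> Prop) (P : Cantor -> Prop) : Cantor -> Prop :=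
  fun x => P x /\
    ~ (exists U, is_open U /\ U x /\
         exists C0, C C0 /\ forall y, P y -> U y -> C0 y).

Fixpoint deriv_seq (C : (Cantor -> Prop) -> Prop) (nu : Ord) : Cantor -> Prop :=
  match nu with
  | OZ => fun _ => True
  | OS a => deriv_step C (deriv_seq C a)
  | OL h => fun x => forall n, deriv_seq C (h n) x
  end.

Definition bfam (f : Cantor -> R) (p e : Q) : (Cantor -> Prop) -> Prop :=
  fun C0 => C0 = (fun y => f y < Q2R p + Q2R e) \/ C0 = (fun y => Q2R p - Q2R e < f y).

Definition P_seq (f : Cantor -> R) (p e : Q) (nu : Ord) : Cantor -> Prop :=
  deriv_seq (bfam f p e) nu.

Definition is_alpha (f : Cantor -> R) (p e : Q) (a : Ord) : Prop :=
  (forall x, ~ P_seq f p e a x) /\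
  (forall b, (forall x, ~ P_seq f p e b x) -> ord_le a b).

(** r is (a representative of) |f|_alpha = sup_{p, e > 0} alpha(f,p,e) *)
Definition is_rank (f : Cantor -> R) (r : Ord) : Prop :=
  (forall p e a, (0 < e)%Q -> is_alpha f p e a -> ord_le a r) /\
  (forall r', (forall p e a, (0 < e)%Q -> is_alpha f p e a -> ord_le a r') -> ord_le r r').

Definition correct (y : R) (p e : Q) (b : bool) : Prop :=
  (b = true /\ y < Q2R p + Q2R e) \/ (b = false /\ Q2R p - Q2R e < y).

Definition prefix (A : Cantor) (r : nat) : list bool := map A (seq 0 r).

Definition tt1 (f g : Cantor -> R) : Prop :=
  forall p e : Q, (0 < e)%Q ->
    exists (k : Cantor -> Cantor) (q d : Q) (r : nat) (h : list bool -> bool -> bool),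
      cont_C k /\ (0 < d)%Q /\
      forall (A : Cantor) (b : bool),
        correct (g (k A)) q d b -> correct (f A) p e (h (prefix A r) b).

(* Main.v *)
Require Import Defs.
From Stdlib Require Import Reals QArith Qreals List Lra Lia Classical ClassicalEpsilon FunctionalExtensionality.
From Stdlib Require Import PArith ZArith.
From Stdlib Require Arith.Cantor.


Lemma ole_S_inv a b : ord_le (OS a) b -> ord_lt a b.
Proof. intros H; inversion H; subst; auto. Qed.
Lemma ole_L_inv h b : ord_le (OL h) b -> forall n, ord_le (h n) b.
Proof. intros H; inversion H; subst; auto. Qed.
Lemma olt_S_inv a b : ord_lt a (OS b) -> ord_le a b.
Proof. intros H; inversion H; subst; auto. Qed.
Lemma olt_L_inv a h : ord_lt a (OL h) -> exists n, ord_lt a (h n).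
Proof. intros H; inversion H; subst; eauto. Qed.
Lemma olt_Z a : ~ ord_lt a OZ.
Proof. intros H; inversion H. Qed.

Lemma helper1 a : (forall b c, ord_le a b -> ord_le b c -> ord_le a c) ->
  forall b c, ord_le a b -> ord_lt b c -> ord_lt a c.
Proof.
  intros Htr b c Hab Hbc. revert Hab. induction Hbc; intros Hab.
  - constructor. eauto.
  - econstructor. eauto.
Qed.

Lemma helper2 a b : ord_lt a b -> (forall b c, ord_le a b -> ord_le b c -> ord_le a c) ->
  forall c, ord_le b c -> ord_lt a c.
Proof.
  induction 1; intros Htr c Hbc.
  - apply ole_S_inv in Hbc. eapply helper1; eauto.
  - apply IHord_lt; auto. eapply ole_L_inv; eauto.
Qed.

Lemma ord_le_trans : forall a b c, ord_le a b -> ord_le b c -> ord_le a c.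
Proof.
  induction a as [|a IH|h IH]; intros b c Hab Hbc.
  - constructor.
  - apply ole_S_inv in Hab. constructor. eapply helper2; eauto.
  - constructor. intros n. eapply IH; [|eauto]. eapply ole_L_inv; eauto.
Qed.

Lemma ord_le_lt_trans a b c : ord_le a b -> ord_lt b c -> ord_lt a c.
Proof. apply helper1. intros; eapply ord_le_trans; eauto. Qed.
Lemma ord_lt_le_trans a b c : ord_lt a b -> ord_le b c -> ord_lt a c.
Proof. intros H; apply (helper2 a b H). intros; eapply ord_le_trans; eauto. Qed.

Lemma ord_le_L a h n : ord_le a (h n) -> ord_le a (OL h).
Proof.
  revert n. induction a as [|a IH|k IH]; intros n H.
  - constructor.
  - constructor. apply ole_S_inv in H. econstructor; eauto.
  - constructor. intros m. eapply IH. eapply ole_L_inv; eauto.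
Qed.

Lemma ord_le_refl a : ord_le a a.
Proof.
  induction a as [|a IH|h IH].
  - constructor.
  - constructor. constructor. auto.
  - constructor. intros n. eapply ord_le_L; eauto.
Qed.

Lemma ord_lt_S a : ord_lt a (OS a).
Proof. constructor. apply ord_le_refl. Qed.

Lemma ord_lt_le a b : ord_lt a b -> ord_le a b.
Proof.
  revert b. induction a as [|a IH|h IH]; intros b H.
  - constructor.
  - remember (OS a) as x. revert a IH Heqx. induction H; intros a' IH Heqx; subst.
    + apply ole_S_inv in H. constructor. constructor. auto.
    + eapply ord_le_L. eapply IHord_lt; eauto.
  - constructor. intros n. apply IH. eapply ord_le_lt_trans; [|eauto].
    eapply ord_le_L; apply ord_le_refl.
Qed.

Lemma ord_wf : well_founded ord_lt.
Proof.
  assert (H : forall a b, ord_lt b a -> Acc ord_lt b).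
  { induction a as [|a IH|h IH]; intros b Hb.
    - exfalso; eapply olt_Z; eauto.
    - apply olt_S_inv in Hb. constructor. intros c Hc. apply IH.
      eapply ord_lt_le_trans; eauto.
    - apply olt_L_inv in Hb. destruct Hb as [n Hn]. eapply IH; eauto. }
  intros a. constructor. intros b Hb. eapply H; eauto.
Qed.

Lemma ord_lt_irrefl a : ~ ord_lt a a.
Proof.
  induction (ord_wf a) as [a _ IH]. intros H. eapply IH; eauto.
Qed.

Lemma ord_total a b : ord_le a b \/ ord_lt b a.
Proof.
  revert b. induction a as [|a IH|h IH]; intros b.
  - left; constructor.
  - induction b as [|b _|k IHk].
    + right. constructor. constructor.
    + destruct (IH b) as [H|H].
      * left. constructor. constructor. auto.
      * right. constructor. constructor. auto.
    + destruct (classic (exists n, ord_le (OS a) (k n))) as [[n Hn]|Hn].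
      * left. eapply ord_le_L; eauto.
      * right. constructor. constructor. intros n.
        destruct (IHk n) as [H|H]. { exfalso; eauto. }
        apply olt_S_inv; auto.
  - destruct (classic (forall n, ord_le (h n) b)) as [H|H].
    + left; constructor; auto.
    + apply not_all_ex_not in H. destruct H as [n Hn].
      destruct (IH n b) as [H|H]; [tauto|]. right. econstructor; eauto.
Qed.

Lemma ord_not_le a b : ~ ord_le a b -> ord_lt b a.
Proof. intros H; destruct (ord_total a b); tauto. Qed.
Lemma ord_not_lt a b : ~ ord_lt a b -> ord_le b a.
Proof. intros H; destruct (ord_total b a); tauto. Qed.
Lemma ord_lt_trans a b c : ord_lt a b -> ord_lt b c -> ord_lt a c.
Proof. intros H1 H2; eapply ord_le_lt_trans; eauto; apply ord_lt_le; auto. Qed.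
Lemma ord_le_S_mono a b : ord_le a b -> ord_le (OS a) (OS b).
Proof. intros; constructor; constructor; auto. Qed.
Lemma ord_le_lt_false a b : ord_le a b -> ord_lt b a -> False.
Proof. intros H1 H2. eapply ord_lt_irrefl. eapply ord_le_lt_trans; eauto. Qed.

Lemma ord_min (Q : Ord -> Prop) b : Q b -> exists a, Q a /\ forall c, Q c -> ord_le a c.
Proof.
  induction (ord_wf b) as [b _ IH]. intros Hb.
  destruct (classic (forall c, Q c -> ord_le b c)) as [H|H]; [eauto|].
  apply not_all_ex_not in H. destruct H as [c Hc].
  apply imply_to_and in Hc. destruct Hc as [Hc1 Hc2].
  apply (IH c); auto. apply ord_not_le; auto.
Qed.

Fixpoint rprefix (x : Cantor) (n : nat) : list bool :=
  match n with O => nil | S n => x n :: rprefix x n end.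

Lemma rprefix_length x n : length (rprefix x n) = n.
Proof. induction n; simpl; auto. Qed.

Lemma rprefix_agree x y n : rprefix x n = rprefix y n <-> agree n x y.
Proof.
  induction n; simpl; split; intros H.
  - intros i Hi; lia.
  - auto.
  - injection H; intros H1 H2. intros i Hi.
    destruct (Nat.eq_dec i n); [subst; auto|]. apply IHn; auto; lia.
  - f_equal. apply H; lia. apply IHn. intros i Hi; apply H; lia.
Qed.

Lemma agree_refl n x : agree n x x.
Proof. intros i _; auto. Qed.
Lemma agree_sym n x y : agree n x y -> agree n y x.
Proof. intros H i Hi; symmetry; auto. Qed.
Lemma agree_trans n x y z : agree n x y -> agree n y z -> agree n x z.
Proof. intros H1 H2 i Hi; rewrite H1; auto. Qed.
Lemma agree_le m n x y : (m <= n)%nat -> agree n x y -> agree m x y.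
Proof. intros H1 H2 i Hi; apply H2; lia. Qed.

Definition closed (F : Cantor -> Prop) : Prop :=
  forall x, (forall n, exists y, agree n x y /\ F y) -> F x.

Definition cylset (l : list bool) (y : Cantor) : Prop := rprefix y (length l) = l.

Lemma cylset_rprefix x n y : cylset (rprefix x n) y <-> agree n x y.
Proof.
  unfold cylset; rewrite rprefix_length. split; intros H.
  apply rprefix_agree; auto. symmetry; apply rprefix_agree; auto.
Qed.

Fixpoint build (nb : list bool -> bool) (n : nat) : list bool :=
  match n with O => nil | S n => nb (build nb n) :: build nb n end.

Lemma build_rprefix nb n : rprefix (fun i => nb (build nb i)) n = build nb n.
Proof. induction n; simpl; auto. rewrite IHn; auto. Qed.

Lemma cantor_tree (Inv : list bool -> Prop) : Inv nil ->
  (forall l, Inv l -> Inv (true :: l) \/ Inv (false :: l)) ->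
  exists z, forall n, Inv (rprefix z n).
Proof.
  intros H0 HS.
  set (nb := fun l => if excluded_middle_informative (Inv (true :: l)) then true else false).
  exists (fun i => nb (build nb i)). intros n. rewrite build_rprefix.
  induction n; simpl; auto.
  unfold nb at 1. destruct excluded_middle_informative; auto.
  destruct (HS _ IHn); tauto.
Qed.

Lemma directed_compact (I : Type) (F : I -> Cantor -> Prop) :
  (forall i, closed (F i)) -> (forall i, exists x, F i x) ->
  (forall i j, exists k, forall x, F k x -> F i x /\ F j x) ->
  exists x, forall i, F i x.
Proof.
  intros Hc Hne Hd.
  destruct (cantor_tree (fun l => forall i, exists x, F i x /\ cylset l x)) as [z Hz].
  - intros i. destruct (Hne i) as [x Hx]. exists x; split; auto. reflexivity.
  - intros l Hl. apply NNPP. intros Hn. apply not_or_and in Hn. destruct Hn as [H1 H2].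
    apply not_all_ex_not in H1. destruct H1 as [i1 H1].
    apply not_all_ex_not in H2. destruct H2 as [i2 H2].
    destruct (Hd i1 i2) as [k Hk]. destruct (Hl k) as [x [Hx Hxl]].
    destruct (Hk x Hx) as [Hx1 Hx2].
    destruct (x (length l)) eqn:E.
    + apply H1. exists x. split; auto. unfold cylset in *. simpl. rewrite Hxl, E; auto.
    + apply H2. exists x. split; auto. unfold cylset in *. simpl. rewrite Hxl, E; auto.
  - exists z. intros i. apply Hc. intros n. destruct (Hz n i) as [y [Hy Hyl]].
    exists y. split; auto. apply cylset_rprefix; auto.
Qed.

Scheme ole_ind2 := Induction for ord_le Sort Prop
with olt_ind2 := Induction for ord_lt Sort Prop.

Section Deriv.
Variable C : (Cantor -> Prop) -> Prop.

Lemma step_sub P x : deriv_step C P x -> P x.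
Proof. intros [H _]; auto. Qed.

Lemma step_mono (P Q : Cantor -> Prop) x : (forall y, P y -> Q y) ->
  deriv_step C P x -> deriv_step C Q x.
Proof.
  intros HPQ [Hx Hn]. split; auto. intros [U [HU [HUx [C0 [HC0 H]]]]].
  apply Hn. exists U; repeat split; auto. exists C0; split; auto.
Qed.

Lemma deriv_mono_both :
  (forall a b, ord_le a b -> forall x, deriv_seq C b x -> deriv_seq C a x).
Proof.
  apply (ole_ind2 (fun a b _ => forall x, deriv_seq C b x -> deriv_seq C a x)
                  (fun a b _ => forall x, deriv_seq C b x -> deriv_seq C (OS a) x)).
  - intros; simpl; auto.
  - intros a b Hlt IH x Hx. auto.
  - intros h b Hle IH x Hx. simpl. intros n. auto.
  - intros a b Hle IH x Hx. simpl in *. eapply step_mono; eauto.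
  - intros a h n Hlt IH x Hx. apply IH. simpl in Hx. auto.
Qed.

Lemma deriv_mono a b x : ord_le a b -> deriv_seq C b x -> deriv_seq C a x.
Proof. intros; eapply deriv_mono_both; eauto. Qed.

Lemma deriv_mono_lt a b x : ord_lt a b -> deriv_seq C b x -> deriv_seq C (OS a) x.
Proof. intros H; apply deriv_mono. constructor; auto. Qed.

Lemma deriv_closed a : closed (deriv_seq C a).
Proof.
  induction a as [|a IH|h IH]; intros x Hx; simpl.
  - auto.
  - split.
    + apply IH. intros n. destruct (Hx n) as [y [Hy1 Hy2]]. exists y; split; auto.
      apply step_sub in Hy2; auto.
    + intros [U [HU [HUx [C0 [HC0 H]]]]]. destruct (HU x HUx) as [n Hn].
      destruct (Hx n) as [y [Hxy [_ Hy]]]. apply Hy.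
      exists U; repeat split; auto. exists C0; split; auto.
  - intros n. apply IH. intros m. destruct (Hx m) as [y [Hy1 Hy2]]. exists y; split; auto.
Qed.

Lemma deriv_lim a x : (forall nu, ord_lt nu a -> deriv_seq C (OS nu) x) -> deriv_seq C a x.
Proof.
  induction a as [|a IH|h IH]; intros H; simpl.
  - auto.
  - apply (H a). apply ord_lt_S.
  - intros n. apply IH. intros nu Hnu. apply H. econstructor; eauto.
Qed.

End Deriv.

Lemma deriv_refine (C C' : (Cantor -> Prop) -> Prop) :
  (forall C0', C' C0' -> exists C0, C C0 /\ forall y, C0' y -> C0 y) ->
  forall a x, deriv_seq C a x -> deriv_seq C' a x.
Proof.
  intros HCC a. induction a as [|a IH|h IH]; intros x Hx; simpl in *; auto.
  destruct Hx as [Hx Hn]. split; auto.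
  intros [U [HU [HUx [C0' [HC0' H]]]]]. apply Hn. exists U; repeat split; auto.
  destruct (HCC _ HC0') as [C0 [HC0 Hsub]]. exists C0; split; auto.
Qed.
Open Scope R_scope.

Ltac rabs := unfold Rabs in *; repeat (destruct Rcase_abs); lra.

Lemma lim_bound (u : nat -> R) l c eps n : Un_cv u l ->
  (forall m, (m >= n)%nat -> Rabs (u m - c) <= eps) -> Rabs (l - c) <= eps.
Proof.
  intros Hu Hb. destruct (Rle_dec (Rabs (l - c)) eps) as [H|H]; auto.
  exfalso. destruct (Hu (Rabs (l - c) - eps)) as [N HN]; [lra|].
  specialize (HN (Nat.max N n) ltac:(lia)). specialize (Hb (Nat.max N n) ltac:(lia)).
  unfold Rdist in HN. rabs.
Qed.

Lemma open_cyl x n : is_open (fun y => agree n x y).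
Proof. intros y Hy. exists n. intros w Hw. eapply agree_trans; eauto. Qed.

Section Baire.
Variable f : Cantor -> R.
Variable fn : nat -> Cantor -> R.
Hypothesis Hcont : forall n, cont_R (fn n).
Hypothesis Hconv : forall x, Un_cv (fun n => fn n x) (f x).
Variable eps : R.
Hypothesis Heps : 0 < eps.
Variable P : Cantor -> Prop.
Hypothesis HP : closed P.

Definition E n x := P x /\ forall m, (m >= n)%nat -> Rabs (fn m x - fn n x) <= eps.

Lemma E_closed n : closed (E n).
Proof.
  intros x Hx. split.
  - apply HP. intros k. destruct (Hx k) as [y [H1 [H2 _]]]. eauto.
  - intros m Hm. destruct (Rle_dec (Rabs (fn m x - fn n x)) eps) as [H|H]; auto. exfalso.
    set (d := (Rabs (fn m x - fn n x) - eps) / 2).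
    destruct (Hcont m x d) as [N1 HN1]. unfold d; lra.
    destruct (Hcont n x d) as [N2 HN2]. unfold d; lra.
    destruct (Hx (Nat.max N1 N2)) as [y [Hy [_ Hy2]]].
    specialize (Hy2 m Hm).
    specialize (HN1 y (agree_le N1 (Nat.max N1 N2) _ _ ltac:(lia) Hy)).
    specialize (HN2 y (agree_le N2 (Nat.max N1 N2) _ _ ltac:(lia) Hy)).
    apply Rnot_le_lt in H. unfold d in *. rabs.
Qed.

Lemma E_cover x : P x -> exists n, E n x.
Proof.
  intros Hx. destruct (Hconv x (eps / 2)) as [N HN]; [lra|].
  exists N. split; auto. intros m Hm. pose proof (HN m Hm). pose proof (HN N (le_n _)).
  unfold Rdist in *. rabs.
Qed.

Lemma not_closed_nbhd (F : Cantor -> Prop) y : closed F -> ~ F y ->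
  exists L, forall w, agree L y w -> ~ F w.
Proof.
  intros HF Hy. apply NNPP. intros Hn. apply Hy. apply HF. intros L.
  apply NNPP. intros H2. apply Hn. exists L. intros w Hw Fw. apply H2. eauto.
Qed.

Lemma baire_core x0 : P x0 ->
  exists n x N, P x /\ forall y, agree N x y -> P y -> E n y.
Proof.
  intros Hx0. apply NNPP. intros Hn.
  assert (H : forall k x N, P x -> exists y L, agree N x y /\ P y /\ (L > N)%nat /\
                  forall w, agree L y w -> ~ E k w).
  { intros k x N Hx. apply NNPP. intros H2. apply Hn. exists k, x, N. split; auto.
    intros y Hy Py. apply NNPP. intros Ey.
    destruct (not_closed_nbhd _ _ (E_closed k) Ey) as [L HL].
    apply H2. exists y, (S (Nat.max L N)). repeat split; auto. lia.
    intros w Hw. apply HL. eapply agree_le; [|eauto]. lia. }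
  set (NP := fun k (s t : Cantor * nat) => agree (snd s) (fst s) (fst t) /\ P (fst t) /\ (snd t > snd s)%nat /\
         forall w, agree (snd t) (fst t) w -> ~ E k w).
  set (next := fun k (s : Cantor * nat) => epsilon (inhabits s) (NP k s)).
  assert (Hnext : forall k s, P (fst s) -> NP k s (next k s)).
  { intros k s Hs. destruct (H k (fst s) (snd s) Hs) as [y [L HyL]].
    apply (epsilon_spec (inhabits s) (NP k s)). exists (y, L). exact HyL. }
  set (seqs := fix sq (k : nat) : Cantor * nat := match k with O => (x0, O) | S k => next k (sq k) end).
  assert (HPs : forall k, P (fst (seqs k))).
  { induction k. simpl; auto. apply (Hnext k _ IHk). }
  assert (Hsp : forall k, P (fst (seqs k)) /\ (snd (seqs k) >= k)%nat /\
     agree (snd (seqs k)) (fst (seqs k)) (fst (seqs (S k))) /\ (snd (seqs (S k)) > snd (seqs k))%nat /\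
     forall w, agree (snd (seqs (S k))) (fst (seqs (S k))) w -> ~ E k w).
  { induction k.
    - destruct (Hnext O _ (HPs O)) as [A1 [A2 [A3 A4]]]. simpl. repeat split; auto; lia.
    - destruct IHk as [B1 [B2 [B3 [B4 B5]]]].
      destruct (Hnext (S k) _ (HPs (S k))) as [A1 [A2 [A3 A4]]].
      repeat split; auto; lia. }
  assert (Hchain : forall j k, (j <= k)%nat -> agree (snd (seqs j)) (fst (seqs j)) (fst (seqs k))).
  { intros j k Hjk. induction Hjk. apply agree_refl.
    destruct (Hsp m) as [_ [_ [B3 [B4 _]]]]. eapply agree_trans; eauto.
    eapply agree_le; [|eauto]. clear - Hjk Hsp. induction Hjk; auto.
    destruct (Hsp m) as [_ [_ [_ [B4 _]]]]. lia. }
  set (z := fun i => fst (seqs (S i)) i).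
  assert (Hz : forall k, agree (snd (seqs k)) (fst (seqs k)) z).
  { intros k i Hi. unfold z. destruct (Compare_dec.le_lt_dec (S i) k).
    - symmetry. apply (Hchain (S i) k); auto. destruct (Hsp (S i)) as [_ [B _]]. lia.
    - apply (Hchain k (S i)); auto. lia. }
  assert (HPz : P z).
  { apply HP. intros n. exists (fst (seqs n)). split.
    - apply agree_sym. eapply agree_le; [|apply Hz]. destruct (Hsp n) as [_ [B _]]; lia.
    - apply Hsp. }
  destruct (E_cover z HPz) as [k Hk].
  destruct (Hsp k) as [_ [_ [_ [_ B5]]]]. eapply B5; [apply Hz|auto].
Qed.

End Baire.

Lemma baire_step f (Hf : Baire1 f) (p e : Q) (He : 0 < Q2R e) (P : Cantor -> Prop) :
  closed P -> (exists x, P x) ->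
  exists z, P z /\ exists U, is_open U /\ U z /\ exists C0, bfam f p e C0 /\
      forall y, P y -> U y -> C0 y.
Proof.
  intros HP [x0 Hx0]. destruct Hf as [fn [Hcont Hconv]].
  set (eps := Q2R e / 3).
  destruct (baire_core f fn Hcont Hconv eps ltac:(unfold eps; lra) P HP x0 Hx0)
    as [n [x [N [Hx HE]]]].
  destruct (Hcont n x eps ltac:(unfold eps; lra)) as [N1 HN1].
  exists x. split; auto. exists (fun y => agree (Nat.max N N1) x y). split; [apply open_cyl|].
  split; [apply agree_refl|].
  assert (Hb : forall y, P y -> agree (Nat.max N N1) x y -> Rabs (f y - fn n x) < 2 * eps).
  { intros y Py Hy. destruct (HE y (agree_le N (Nat.max N N1) _ _ ltac:(lia) Hy) Py) as [_ Hm].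
    pose proof (lim_bound _ _ _ _ _ (Hconv y) Hm) as H1.
    pose proof (HN1 y (agree_le N1 (Nat.max N N1) _ _ ltac:(lia) Hy)) as H2. rabs. }
  destruct (Rle_dec (fn n x) (Q2R p)) as [Hv|Hv].
  - exists (fun y => f y < Q2R p + Q2R e). split; [left; auto|].
    intros y Py Uy. specialize (Hb y Py Uy). unfold eps in *. rabs.
  - exists (fun y => Q2R p - Q2R e < f y). split; [right; auto|].
    intros y Py Uy. specialize (Hb y Py Uy). unfold eps in *. rabs.
Qed.
Open Scope R_scope.

Fixpoint lob (p : positive) : list bool :=
  match p with xH => nil | xO p => false :: lob p | xI p => true :: lob p end.
Fixpoint pol (l : list bool) : positive :=
  match l with nil => xH | false :: l => xO (pol l) | true :: l => xI (pol l) end.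
Lemma lob_pol l : lob (pol l) = l.
Proof. induction l as [|[|] l IH]; simpl; congruence. Qed.

Lemma Q2R_pos e : (0 < e)%Q -> 0 < Q2R e.
Proof. intros H. apply Qlt_Rlt in H. rewrite RMicromega.Q2R_0 in H. auto. Qed.

Lemma terminates f (Hf : Baire1 f) p e (He : 0 < Q2R e) :
  exists s, forall x, ~ P_seq f p e s x.
Proof.
  unfold P_seq. set (D := deriv_seq (bfam f p e)).
  set (nuc := fun l => epsilon (inhabits OZ) (fun nu => forall y, cylset l y -> ~ D nu y)).
  exists (OL (fun n => nuc (lob (Pos.of_nat n)))). intros x Hx.
  destruct (baire_step f Hf p e He (D (OL (fun n => nuc (lob (Pos.of_nat n)))))
     (deriv_closed _ _) (ex_intro _ x Hx)) as [z [Hz [U [HU [HUz [C0 [HC0 HPU]]]]]]].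
  destruct (HU z HUz) as [N HN].
  set (l := rprefix z N).
  assert (Hl : forall y, cylset l y -> ~ D (nuc l) y).
  { apply (epsilon_spec (inhabits OZ) (fun nu => forall y, cylset l y -> ~ D nu y)).
    exists (OS (OL (fun n => nuc (lob (Pos.of_nat n))))).
    intros y Hy Dy. unfold l in Hy. apply cylset_rprefix in Hy.
    simpl in Dy. destruct Dy as [Dy1 Dy2]. apply Dy2.
    exists U; repeat split; auto. exists C0; split; auto. }
  apply (Hl z). unfold l; apply cylset_rprefix, agree_refl.
  eapply deriv_mono; [|exact Hz].
  apply (ord_le_L _ _ (Pos.to_nat (pol l))). rewrite Pos2Nat.id, lob_pol. apply ord_le_refl.
Qed.

Lemma alpha_exists f (Hf : Baire1 f) p e (He : (0 < e)%Q) : exists a, is_alpha f p e a.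
Proof.
  destruct (terminates f Hf p e (Q2R_pos e He)) as [s Hs].
  destruct (ord_min (fun b => forall x, ~ P_seq f p e b x) s Hs) as [a [Ha1 Ha2]].
  exists a; split; auto.
Qed.

Definition natQ (n : nat) : Q :=
  let (a, r) := Stdlib.Arith.Cantor.of_nat n in
  let (b, c) := Stdlib.Arith.Cantor.of_nat r in
  Qmake (Z.of_nat a - Z.of_nat b)%Z (Pos.of_nat c).

Lemma natQ_surj q : exists n, natQ n = q.
Proof.
  destruct q as [z d].
  exists (Stdlib.Arith.Cantor.to_nat (Z.to_nat z, Stdlib.Arith.Cantor.to_nat (Z.to_nat (- z), Pos.to_nat d))).
  unfold natQ. rewrite !Stdlib.Arith.Cantor.cancel_of_to. rewrite Pos2Nat.id. f_equal. lia.
Qed.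

Definition natQQ (n : nat) : Q * Q :=
  let (a, b) := Stdlib.Arith.Cantor.of_nat n in (natQ a, natQ b).

Lemma natQQ_surj p e : exists n, natQQ n = (p, e).
Proof.
  destruct (natQ_surj p) as [a Ha]. destruct (natQ_surj e) as [b Hb].
  exists (Stdlib.Arith.Cantor.to_nat (a, b)). unfold natQQ.
  rewrite Stdlib.Arith.Cantor.cancel_of_to. congruence.
Qed.

Lemma rank_exists f (Hf : Baire1 f) : exists r, is_rank f r.
Proof.
  set (h := fun n => let (p, e) := natQQ n in
     if Qlt_le_dec 0 e then epsilon (inhabits OZ) (is_alpha f p e) else OZ).
  exists (OL h). split.
  - intros p e a He Ha. destruct (natQQ_surj p e) as [n Hn].
    apply (ord_le_L _ _ n). unfold h. rewrite Hn.
    destruct (Qlt_le_dec 0 e) as [H|H].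
    + pose proof (epsilon_spec (inhabits OZ) (is_alpha f p e) (alpha_exists f Hf p e He)) as [H1 H2].
      apply Ha. auto.
    + exfalso. apply (Qlt_not_le 0 e); auto.
  - intros r' Hr'. constructor. intros n. unfold h. destruct (natQQ n) as [p e].
    destruct (Qlt_le_dec 0 e) as [H|H]; [|constructor].
    apply (Hr' p e); auto.
    apply (epsilon_spec (inhabits OZ) (is_alpha f p e) (alpha_exists f Hf p e H)).
Qed.
Open Scope R_scope.

Lemma prefix_agree x z r : agree r x z -> prefix x r = prefix z r.
Proof.
  intros H. unfold prefix. apply map_ext_in. intros i Hi. apply in_seq in Hi. apply H. lia.
Qed.

Lemma correct_exists y q d : 0 < Q2R d -> exists b, correct y q d b.
Proof.
  intros Hd. destruct (Rlt_le_dec y (Q2R q + Q2R d)).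
  - exists true; left; auto.
  - exists false; right; split; auto; lra.
Qed.

Lemma cont_open (k : Cantor -> Cantor) V : cont_C k -> is_open V -> is_open (fun z => V (k z)).
Proof.
  intros Hk HV z Hz. destruct (HV _ Hz) as [m Hm]. destruct (Hk z m) as [n Hn].
  exists n. intros w Hw. apply Hm. apply Hn; auto.
Qed.

Section Pullback.
Variables f g : Cantor -> R.
Variables (p e q d : Q) (k : Cantor -> Cantor) (r : nat) (h : list bool -> bool -> bool).
Hypothesis Hk : cont_C k.
Hypothesis Hd : 0 < Q2R d.
Hypothesis He : 0 < Q2R e.
Hypothesis Hh : forall A b, correct (g (k A)) q d b -> correct (f A) p e (h (prefix A r) b).

Lemma bfam_of_answer (s : list bool) c :
  exists C0, bfam f p e C0 /\ forall z, correct (f z) p e c -> C0 z.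
Proof.
  destruct c.
  - exists (fun y => f y < Q2R p + Q2R e). split; [left; auto|].
    intros z [[_ H]|[H _]]; [auto|discriminate].
  - exists (fun y => Q2R p - Q2R e < f y). split; [right; auto|].
    intros z [[H _]|[_ H]]; [discriminate|auto].
Qed.

Lemma pullback nu : forall x, h (prefix x r) true <> h (prefix x r) false ->
  P_seq f p e nu x -> P_seq g q d nu (k x).
Proof.
  unfold P_seq. induction nu as [|nu IH|hh IH]; intros x Hnc Hx; simpl in *; auto.
  destruct Hx as [Hx Hn]. split; [apply IH; auto|].
  intros [V [HV [HVx [C0 [HC0 HC]]]]]. apply Hn.
  exists (fun z => agree r x z /\ V (k z)). split.
  { intros z [Hz1 Hz2]. destruct (cont_open k V Hk HV z Hz2) as [n Hn'].
    exists (Nat.max n r). intros w Hw. split.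
    - eapply agree_trans; [eauto|]. eapply agree_le; [|eauto]. lia.
    - apply Hn'. eapply agree_le; [|eauto]. lia. }
  split; [split; auto; apply agree_refl|].
  destruct HC0 as [E|E]; subst C0.
  - destruct (bfam_of_answer (prefix x r) (h (prefix x r) true)) as [C0' [HC0' HC']].
    exists C0'. split; auto. intros z Pz [Hz1 Hz2]. apply HC'.
    rewrite (prefix_agree x z r Hz1). apply Hh. left. split; auto.
    apply HC; auto. apply IH; auto. rewrite <- (prefix_agree x z r Hz1); auto.
  - destruct (bfam_of_answer (prefix x r) (h (prefix x r) false)) as [C0' [HC0' HC']].
    exists C0'. split; auto. intros z Pz [Hz1 Hz2]. apply HC'.
    rewrite (prefix_agree x z r Hz1). apply Hh. right. split; auto.
    apply HC; auto. apply IH; auto. rewrite <- (prefix_agree x z r Hz1); auto.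
Qed.

Lemma const_case x : h (prefix x r) true = h (prefix x r) false -> ~ P_seq f p e (OS OZ) x.
Proof.
  intros Hc [_ Hn]. apply Hn.
  destruct (bfam_of_answer (prefix x r) (h (prefix x r) true)) as [C0' [HC0' HC']].
  exists (fun z => agree r x z). split; [apply open_cyl|]. split; [apply agree_refl|].
  exists C0'. split; auto. intros z _ Hz. apply HC'.
  rewrite (prefix_agree x z r Hz).
  destruct (correct_exists (g (k z)) q d Hd) as [[|] Hb].
  - apply Hh; auto.
  - rewrite <- (prefix_agree x z r Hz), Hc, (prefix_agree x z r Hz). apply Hh; auto.
Qed.

End Pullback.

Lemma alpha_pos f p e a : is_alpha f p e a -> ord_le (OS OZ) a.
Proof.
  intros [H1 _]. constructor. apply ord_not_le. intros Ha.
  apply (H1 (fun _ => true)). eapply deriv_mono; eauto. simpl; auto.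
Qed.

Lemma tt1_rank f g (Hf : Baire1 f) (Hg : Baire1 g) rf rg :
  is_rank f rf -> is_rank g rg -> tt1 f g -> ord_le rf rg.
Proof.
  intros Hrf Hrg Htt. apply (proj2 Hrf). intros p e a He Ha.
  destruct (Htt p e He) as [k [q [d [r [h [Hk [Hd Hh]]]]]]].
  destruct (alpha_exists g Hg q d Hd) as [ag Hag].
  eapply ord_le_trans; [|apply (proj1 Hrg q d ag Hd Hag)].
  apply (proj2 Ha). intros x Hx.
  destruct (classic (h (prefix x r) true = h (prefix x r) false)) as [Hc|Hc].
  - apply (const_case f g p e q d k r h (Q2R_pos d Hd) Hh x Hc).
    eapply deriv_mono; [|exact Hx]. apply (alpha_pos g q d); auto.
  - apply (proj1 Hag (k x)). eapply pullback; eauto.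
Qed.
Open Scope R_scope.

Lemma succ_alpha f (Hf : Baire1 f) p e (He : (0 < e)%Q) :
  exists b, (exists x, P_seq f p e b x) /\ forall x, ~ P_seq f p e (OS b) x.
Proof.
  destruct (terminates f Hf p e (Q2R_pos e He)) as [s Hs].
  destruct (ord_min (fun nu => forall x, ~ P_seq f p e (OS nu) x) s) as [b [Hb1 Hb2]].
  { intros x Hx. apply (Hs x). eapply step_sub; eauto. }
  exists b. split; auto. apply NNPP. intros Hn.
  destruct (directed_compact {nu | ord_lt nu b} (fun i => P_seq f p e (OS (proj1_sig i)))) as [x Hx].
  - intros i. apply deriv_closed.
  - intros [nu Hnu]. simpl. apply NNPP. intros H. apply (ord_le_lt_false b nu); auto.
    apply Hb2. intros x Hx. apply H. eauto.
  - intros [i Hi] [j Hj]. simpl. destruct (ord_total i j) as [H|H].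
    + exists (exist _ j Hj). simpl. intros x Hx. split; auto.
      eapply deriv_mono; [|exact Hx]. apply ord_le_S_mono; auto.
    + exists (exist _ i Hi). simpl. intros x Hx. split; auto.
      eapply deriv_mono; [|exact Hx]. apply ord_le_S_mono. apply ord_lt_le; auto.
  - apply Hn. exists x. apply deriv_lim. intros nu Hnu. apply (Hx (exist _ nu Hnu)).
Qed.

Lemma find_qd g b rg : is_rank g rg -> Baire1 g ->
  ~ ord_le rg b -> exists q d, (0 < d)%Q /\ exists y, P_seq g q d b y.
Proof.
  intros [H1 H2] Hg Hn. apply NNPP. intros H. apply Hn. apply H2.
  intros q d a Hd Ha. apply (proj2 Ha). intros x Hx. apply H. exists q, d. split; eauto.
Qed.

Lemma Q2R_half d : Q2R (d / 2) = Q2R d / 2.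
Proof. rewrite Q2R_div. unfold Q2R at 2; simpl. field. intro H; discriminate. Qed.

Lemma modify_qd g q d b y : (0 < d)%Q -> P_seq g q d b y ->
  exists q' d', (0 < d')%Q /\ P_seq g q' d' b y /\
     (Q2R q' + Q2R d' <= g y \/ g y <= Q2R q' - Q2R d').
Proof.
  intros Hd Hy. pose proof (Q2R_pos d Hd) as Hd'.
  assert (Hd2 : (0 < d / 2)%Q).
  { apply Rlt_Qlt. rewrite Q2R_half, RMicromega.Q2R_0. lra. }
  destruct (Rle_dec (g y) (Q2R q)) as [H|H].
  - exists (q + d / 2)%Q, (d / 2)%Q. split; auto. split.
    + unfold P_seq in *. eapply deriv_refine; [|exact Hy].
      intros C0' [E|E]; subst C0'; rewrite Q2R_plus, Q2R_half.
      * exists (fun y => g y < Q2R q + Q2R d). split; [left; auto|]. intros z Hz; lra.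
      * exists (fun y => Q2R q - Q2R d < g y). split; [right; auto|]. intros z Hz; lra.
    + right. rewrite Q2R_plus, Q2R_half. lra.
  - exists (q - d / 2)%Q, (d / 2)%Q. split; auto.
    assert (Hm : Q2R (q - d / 2) = Q2R q - Q2R d / 2).
    { unfold Qminus. rewrite Q2R_plus, Q2R_opp, Q2R_half. ring. }
    split.
    + unfold P_seq in *. eapply deriv_refine; [|exact Hy].
      intros C0' [E|E]; subst C0'; rewrite Hm, Q2R_half.
      * exists (fun y => g y < Q2R q + Q2R d). split; [left; auto|]. intros z Hz; lra.
      * exists (fun y => Q2R q - Q2R d < g y). split; [right; auto|]. intros z Hz; lra.
    + left. rewrite Hm, Q2R_half. lra.
Qed.
Open Scope R_scope.

Section Construct.
Variables f g : Cantor -> R.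
Variables p e q d : Q.
Hypothesis He : 0 < Q2R e.
Hypothesis Hd : 0 < Q2R d.
Variable beta : Ord.
Hypothesis Hbeta : forall x, ~ P_seq f p e (OS beta) x.
Variable ystar : Cantor.
Hypothesis Hys : P_seq g q d beta ystar.
Hypothesis Hcol : Q2R q + Q2R d <= g ystar \/ g ystar <= Q2R q - Q2R d.

Definition Pf nu := P_seq f p e nu.
Definition Pg nu := P_seq g q d nu.
Definition F0 z := f z < Q2R p + Q2R e.
Definition F1 z := Q2R p - Q2R e < f z.
Definition GA y := Q2R q + Q2R d <= g y.
Definition GB y := g y <= Q2R q - Q2R d.
Definition region nu l z := Pf nu z /\ cylset l z.
Definition mono nu l := (forall z, region nu l z -> F0 z) \/ (forall z, region nu l z -> F1 z).
Definition needA (S : Cantor -> Prop) := exists z, S z /\ Q2R p + Q2R e <= f z.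
Definition needB (S : Cantor -> Prop) := exists z, S z /\ f z <= Q2R p - Q2R e.

Lemma mono_cases nu l : mono nu l -> needA (region nu l) -> needB (region nu l) -> False.
Proof.
  intros [H|H] [z [Hz1 Hz2]] [w [Hw1 Hw2]].
  - specialize (H z Hz1). unfold F0 in H. lra.
  - specialize (H w Hw1). unfold F1 in H. lra.
Qed.

Lemma GA_GB y : GA y -> GB y -> False.
Proof. unfold GA, GB; intros; lra. Qed.

Lemma cyl_step l b z : cylset (b :: l) z -> cylset l z.
Proof. unfold cylset; simpl. intros H. injection H; auto. Qed.

Lemma mono_sub nu l l' : (forall z, cylset l z -> cylset l' z) -> mono nu l' -> mono nu l.
Proof.
  intros Hs [H|H]; [left|right]; intros z [Hz1 Hz2]; apply H; split; auto.
Qed.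

Lemma top_r : exists r, forall l, length l = r -> mono beta l.
Proof.
  apply NNPP. intros Hn.
  assert (HK : forall n, exists x, Pf beta x /\ ~ mono beta (rprefix x n)).
  { intros n. apply NNPP. intros H. apply Hn. exists n. intros l Hl.
    apply NNPP. intros Hm. apply Hm. left. intros z [Hz1 Hz2]. exfalso.
    apply H. exists z. split; auto. unfold cylset in Hz2. rewrite Hl in Hz2. rewrite Hz2. auto. }
  destruct (directed_compact nat (fun n x => Pf beta x /\ ~ mono beta (rprefix x n))) as [x Hx].
  - intros n x Hx. split.
    + apply deriv_closed. intros m. destruct (Hx m) as [y [Hy1 [Hy2 _]]]. eauto.
    + destruct (Hx n) as [y [Hy1 [_ Hy2]]]. apply rprefix_agree in Hy1. rewrite Hy1. auto.
  - auto.
  - intros i j. exists (Nat.max i j). intros x [Hx1 Hx2]. cbn beta.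
    assert (Hs : forall m, (m <= Nat.max i j)%nat -> ~ mono beta (rprefix x m)).
    { intros m Hm Hmo. apply Hx2. eapply mono_sub; [|exact Hmo].
      intros z Hz. apply cylset_rprefix. apply cylset_rprefix in Hz. eapply agree_le; [|eauto]; lia. }
    split; split; auto; apply Hs; lia.
  - apply (Hbeta x). split. apply (Hx O).
    intros [U [HU [HUx [C0 [HC0 HC]]]]]. destruct (HU x HUx) as [N HN].
    apply (proj2 (Hx N)). destruct HC0 as [E|E]; subst C0; [left|right];
    intros z [Hz1 Hz2]; apply HC; auto; apply HN; apply cylset_rprefix; auto.
Qed.


Definition empt nu l := forall z, cylset l z -> ~ Pf (OS nu) z.
Definition mo l := epsilon (inhabits OZ) (fun nu => empt nu l /\ forall mu, empt mu l -> ord_le nu mu).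

Lemma mo_spec l : empt (mo l) l /\ forall mu, empt mu l -> ord_le (mo l) mu.
Proof.
  apply (epsilon_spec (inhabits OZ) (fun nu => empt nu l /\ forall mu, empt mu l -> ord_le nu mu)).
  apply (ord_min (fun nu => empt nu l) beta). intros z _; apply Hbeta.
Qed.

Lemma mo_le_beta l : ord_le (mo l) beta.
Proof. apply (proj2 (mo_spec l)). intros z _; apply Hbeta. Qed.

Definition incl l l' := forall z, cylset l z -> cylset l' z.

Lemma mo_sub l l' : incl l l' -> ord_le (mo l) (mo l').
Proof.
  intros H. apply (proj2 (mo_spec l)). intros z Hz. apply (proj1 (mo_spec l')). auto.
Qed.

Definition monoL l := mono (mo l) l.
Definition tau l := if excluded_middle_informative (monoL l) then mo l else OS (mo l).

Lemma tau_cases l : (monoL l /\ tau l = mo l) \/ (~ monoL l /\ tau l = OS (mo l)).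
Proof. unfold tau. destruct excluded_middle_informative; auto. Qed.

Lemma mo_le_tau l : ord_le (mo l) (tau l).
Proof.
  destruct (tau_cases l) as [[_ E]|[_ E]]; rewrite E. apply ord_le_refl.
  apply ord_lt_le, ord_lt_S.
Qed.

Lemma region_mono nu nu' l l' : incl l l' -> ord_le nu' nu ->
  forall z, region nu l z -> region nu' l' z.
Proof. intros Hi Hn z [H1 H2]; split; auto. eapply deriv_mono; eauto. Qed.

Lemma tau_sub l l' : incl l l' -> ord_le (tau l) (tau l').
Proof.
  intros Hi. pose proof (mo_sub l l' Hi) as Hm.
  destruct (tau_cases l) as [[H1 E1]|[H1 E1]]; rewrite E1.
  - eapply ord_le_trans; [exact Hm|apply mo_le_tau].
  - destruct (ord_total (mo l') (mo l)) as [H|H].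
    + destruct (tau_cases l') as [[H2 E2]|[H2 E2]]; rewrite E2.
      * exfalso. apply H1. unfold monoL.
        destruct H2 as [H2|H2]; [left|right]; intros z Hz; apply H2;
          (eapply region_mono; [exact Hi|exact H|exact Hz]).
      * apply ord_le_S_mono; auto.
    + eapply ord_le_trans; [|apply mo_le_tau]. constructor; auto.
Qed.

Definition XA (s : bool) y := if s then GB y else GA y.
Definition XB (s : bool) y := if s then GA y else GB y.
Definition okc s l y := Pg (tau l) y /\
  (monoL l -> (needA (region (mo l) l) -> XA s y) /\ (needB (region (mo l) l) -> XB s y)).

Lemma ok_pres s l l' y : incl l l' -> okc s l' y -> ~ ord_lt (tau l) (tau l') -> okc s l y.
Proof.
  intros Hi [Hy1 Hy2] Hn. split.
  - eapply deriv_mono; [apply tau_sub; eauto|]. exact Hy1.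
  - intros Hmo. destruct (tau_cases l) as [[_ E1]|[H1 E1]]; [|tauto].
    destruct (ord_total (mo l') (mo l)) as [H|H].
    + destruct (tau_cases l') as [[H2 E2]|[H2 E2]].
      * destruct (Hy2 H2) as [A1 A2]. split.
        -- intros [z [Hz1 Hz2]]. apply A1. exists z. split; auto.
           eapply region_mono; [exact Hi|exact H|exact Hz1].
        -- intros [z [Hz1 Hz2]]. apply A2. exists z. split; auto.
           eapply region_mono; [exact Hi|exact H|exact Hz1].
      * exfalso. apply Hn. rewrite E1, E2. constructor. apply mo_sub; auto.
    + exfalso. apply Hn. rewrite E1. eapply ord_lt_le_trans; [exact H|apply mo_le_tau].
Qed.

Lemma colored mu y n : Pg (OS mu) y ->
  (exists y', agree n y y' /\ Pg mu y' /\ GA y') /\ (exists y', agree n y y' /\ Pg mu y' /\ GB y').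
Proof.
  intros [Hy Hn]. split.
  - apply NNPP. intros H. apply Hn. exists (fun z => agree n y z). split; [apply open_cyl|].
    split; [apply agree_refl|]. exists (fun z => g z < Q2R q + Q2R d). split; [left; auto|].
    intros z Pz Uz. apply Rnot_le_lt. intros Hz. apply H. exists z; repeat split; auto.
  - apply NNPP. intros H. apply Hn. exists (fun z => agree n y z). split; [apply open_cyl|].
    split; [apply agree_refl|]. exists (fun z => Q2R q - Q2R d < g z). split; [right; auto|].
    intros z Pz Uz. apply Rnot_le_lt. intros Hz. apply H. exists z; repeat split; auto.
Qed.

Lemma ok_exists s l l' y n : incl l l' -> okc s l' y -> ord_lt (tau l) (tau l') ->
  exists y', agree n y y' /\ okc s l y'.
Proof.
  intros Hi [Hy1 _] Hlt.
  assert (Hy : Pg (OS (tau l)) y) by (eapply deriv_mono; [|exact Hy1]; constructor; auto).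
  destruct (colored (tau l) y n Hy) as [[ya [Ha1 [Ha2 Ha3]]] [yb [Hb1 [Hb2 Hb3]]]].
  destruct (classic (monoL l /\ needA (region (mo l) l))) as [[Hm HA]|HnA].
  - assert (~ needB (region (mo l) l)) by (intros HB; eapply mono_cases; eauto).
    destruct s.
    + exists yb. split; auto. split; auto. intros _; split; [intros _; exact Hb3|tauto].
    + exists ya. split; auto. split; auto. intros _; split; [intros _; exact Ha3|tauto].
  - destruct s.
    + exists ya. split; auto. split; auto. intros Hm; split; [intros; exfalso; tauto|intros _; exact Ha3].
    + exists yb. split; auto. split; auto. intros Hm; split; [intros; exfalso; tauto|intros _; exact Hb3].
Qed.

End Construct.
Open Scope R_scope.

Section Build.
Variables f g : Cantor -> R.
Variables p e q d : Q.
Hypothesis He : 0 < Q2R e.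
Hypothesis Hd : 0 < Q2R d.
Variable beta : Ord.
Hypothesis Hbeta : forall x, ~ P_seq f p e (OS beta) x.
Variable ystar : Cantor.
Hypothesis Hys : P_seq g q d beta ystar.
Hypothesis Hcol : Q2R q + Q2R d <= g ystar \/ g ystar <= Q2R q - Q2R d.
Variable r : nat.
Hypothesis Hr : forall l, length l = r -> mono f p e beta l.

Notation mo := (mo f p e).
Notation tau := (tau f p e).
Notation monoL := (monoL f p e).
Notation okc := (okc f g p e q d).
Notation region := (region f p e).
Notation needA := (needA f p e).
Notation needB := (needB f p e).
Notation GA := (GA g q d).
Notation GB := (GB g q d).
Notation XA := (XA g q d).
Notation XB := (XB g q d).

Definition sgn (s : list bool) : bool :=
  if excluded_middle_informative ((needA (region (mo s) s) /\ GB ystar) \/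
                                  (needB (region (mo s) s) /\ GA ystar)) then true else false.
Definition top (l : list bool) := skipn (length l - r) l.
Definition sigma l := sgn (top l).

Lemma top_ok s : length s = r -> okc (sgn s) s ystar.
Proof.
  intros Hs. split.
  - eapply deriv_mono; [|exact Hys].
    destruct (tau_cases f p e s) as [[_ E]|[H1 E]]; rewrite E.
    + eapply mo_le_beta; eauto.
    + constructor. destruct (ord_total beta (mo s)) as [H|H]; auto.
      exfalso. apply H1. destruct (Hr s Hs) as [H2|H2]; [left|right]; intros z Hz; apply H2;
        (eapply region_mono; [intros w; exact (fun x => x)|exact H|exact Hz]).
  - intros Hm. unfold sgn. destruct excluded_middle_informative as [Hc|Hc]; split; intros HN.
    + destruct Hc as [[_ Hc]|[Hc _]]; [exact Hc|exfalso; eapply mono_cases; eauto].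
    + destruct Hc as [[Hc _]|[_ Hc]]; [exfalso; eapply mono_cases; eauto|exact Hc].
    + destruct Hcol as [H|H]; [exact H|exfalso; apply Hc; left; auto].
    + destruct Hcol as [H|H]; [exfalso; apply Hc; right; auto|exact H].
Qed.

Fixpoint Y (l : list bool) : Cantor :=
  match l with
  | nil => ystar
  | b :: l' => let y := Y l' in
      if Nat.ltb (length l') r then y
      else if excluded_middle_informative (okc (sigma (b :: l')) (b :: l') y) then y
      else epsilon (inhabits y) (fun y' => agree (length l') y y' /\ okc (sigma (b :: l')) (b :: l') y')
  end.

Lemma top_cons b l : (length l >= r)%nat -> top (b :: l) = top l.
Proof.
  intros H. unfold top. simpl length. replace (S (length l) - r)%nat with (S (length l - r)) by lia.
  reflexivity.
Qed.

Lemma top_len l : length l = r -> top l = l.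
Proof. intros H. unfold top. replace (length l - r)%nat with O by lia. reflexivity. Qed.

Lemma Y_short l : (length l <= r)%nat -> Y l = ystar.
Proof.
  induction l as [|b l IH]; simpl; intros H; auto.
  destruct (Nat.ltb_spec (length l) r); [apply IH; lia|lia].
Qed.

Lemma incl_cons b l : incl (b :: l) l.
Proof. intros z; apply cyl_step. Qed.

Lemma Y_inv l : (length l >= r)%nat -> okc (sigma l) l (Y l).
Proof.
  induction l as [|b l IH]; intros H.
  - simpl in H. unfold sigma. rewrite top_len by (simpl; lia). apply top_ok. simpl; lia.
  - simpl Y. destruct (Nat.ltb_spec (length l) r) as [H1|H1].
    + rewrite Y_short by lia. unfold sigma. rewrite top_len by (simpl in *; lia).
      apply top_ok. simpl in *; lia.
    + specialize (IH H1). unfold sigma in *. rewrite top_cons in * by auto.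
      destruct excluded_middle_informative as [Hok|Hok]; auto.
      apply (epsilon_spec (inhabits (Y l))
         (fun y' => agree (length l) (Y l) y' /\ okc (sgn (top l)) (b :: l) y')).
      destruct (classic (ord_lt (tau (b :: l)) (tau l))) as [Hlt|Hlt].
      * eapply ok_exists; eauto. apply incl_cons.
      * exfalso. apply Hok. eapply ok_pres; eauto. apply incl_cons.
Qed.

Lemma Y_agree b l : agree (length l) (Y l) (Y (b :: l)).
Proof.
  simpl. destruct (Nat.ltb_spec (length l) r) as [H1|H1]; [apply agree_refl|].
  destruct excluded_middle_informative as [Hok|Hok]; [apply agree_refl|].
  pose proof (Y_inv l H1) as IH. unfold sigma in *. rewrite top_cons in * by auto.
  assert (Hs := epsilon_spec (inhabits (Y l))
         (fun y' => agree (length l) (Y l) y' /\ okc (sgn (top l)) (b :: l) y')).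
  apply Hs.
  destruct (classic (ord_lt (tau (b :: l)) (tau l))) as [Hlt|Hlt].
  * eapply ok_exists; eauto. apply incl_cons.
  * exfalso. apply Hok. eapply ok_pres; eauto. apply incl_cons.
Qed.

Lemma Y_stable b l : (length l >= r)%nat -> ~ ord_lt (tau (b :: l)) (tau l) -> Y (b :: l) = Y l.
Proof.
  intros H1 Hn. simpl. destruct (Nat.ltb_spec (length l) r) as [H2|H2]; [lia|].
  destruct excluded_middle_informative as [Hok|Hok]; auto.
  exfalso. apply Hok. pose proof (Y_inv l H1) as IH. unfold sigma in *. rewrite top_cons in * by auto.
  eapply ok_pres; eauto. apply incl_cons.
Qed.

Definition kf (A : Cantor) : Cantor := fun i => Y (rprefix A (S i + r)) i.

Lemma Y_chain A M N : (M <= N)%nat -> agree M (Y (rprefix A M)) (Y (rprefix A N)).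
Proof.
  induction 1. apply agree_refl.
  eapply agree_trans; [exact IHle|]. simpl.
  eapply agree_le; [|apply (Y_agree (A m) (rprefix A m))]. rewrite rprefix_length; auto.
Qed.

Lemma kf_cont : cont_C kf.
Proof.
  intros x m. exists m. intros y Hxy i Hi. unfold kf.
  set (M := Nat.min (S i + r) m).
  rewrite <- (Y_chain x M (S i + r)) by (unfold M; lia).
  rewrite <- (Y_chain y M (S i + r)) by (unfold M; lia).
  replace (rprefix y M) with (rprefix x M); [reflexivity|].
  apply rprefix_agree. eapply agree_le; [|exact Hxy]. unfold M; lia.
Qed.

Lemma top_rprefix A n : (n >= r)%nat -> top (rprefix A n) = rprefix A r.
Proof.
  intros H. unfold top. rewrite rprefix_length.
  replace n with ((n - r) + r)%nat at 2 by lia. generalize (n - r)%nat. intros k.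
  induction k; simpl; auto.
Qed.

Lemma incl_rprefix A n m : (n <= m)%nat -> incl (rprefix A m) (rprefix A n).
Proof.
  intros H z Hz. apply cylset_rprefix. apply cylset_rprefix in Hz. eapply agree_le; eauto.
Qed.

Lemma kf_correct A :
  (Q2R p + Q2R e <= f A -> XA (sgn (rprefix A r)) (kf A)) /\
  (f A <= Q2R p - Q2R e -> XB (sgn (rprefix A r)) (kf A)).
Proof.
  set (tn := fun n => tau (rprefix A n)).
  destruct (ord_min (fun nu => exists n, (n >= r)%nat /\ nu = tn n) (tn r)) as [nu0 [[n0 [Hn0 E0]] Hmin]].
  { exists r; split; auto. }
  subst nu0.
  assert (Hnoninc : forall n m, (n <= m)%nat -> ord_le (tn m) (tn n)).
  { intros n m H. eapply tau_sub; eauto. apply incl_rprefix; auto. }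
  assert (Hstab : forall m, (m >= n0)%nat -> Y (rprefix A m) = Y (rprefix A n0)).
  { induction 1; auto. change (rprefix A (S m)) with (A m :: rprefix A m).
    rewrite Y_stable; auto. rewrite rprefix_length; lia.
    intros Hlt. apply (ord_le_lt_false (tn n0) (tn (S m))).
    - apply Hmin. exists (S m); split; auto; lia.
    - eapply ord_lt_le_trans; [exact Hlt|]. apply Hnoninc; auto. }
  set (y := Y (rprefix A n0)).
  assert (Hk : kf A = y).
  { apply functional_extensionality. intros i. unfold kf.
    rewrite (Y_chain A (S i + r) (Nat.max (S i + r) n0)) by lia.
    rewrite Hstab by lia. reflexivity. }
  rewrite Hk.
  destruct (ord_min (fun nu => ~ Pf f p e (OS nu) A) beta (Hbeta A)) as [rho [Hrho Hrmin]].
  assert (HArho : Pf f p e rho A).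
  { apply deriv_lim. intros nu Hnu. apply NNPP. intros H.
    apply (ord_le_lt_false rho nu); auto. }
  assert (HU : exists U, is_open U /\ U A /\ exists C0, bfam f p e C0 /\
             forall y, Pf f p e rho y -> U y -> C0 y).
  { apply NNPP. intros H. apply Hrho. split; auto. }
  destruct HU as [U [HUo [HUA [C0 [HC0 HC]]]]].
  destruct (HUo A HUA) as [N1 HN1].
  set (n := Nat.max n0 N1). set (l := rprefix A n).
  assert (Hempt : empt f p e rho l).
  { intros z Hz [Hz1 Hz2]. apply Hz2. exists U. split; auto. split.
    apply HN1. apply cylset_rprefix in Hz. eapply agree_le; [|exact Hz]. unfold n; lia.
    exists C0; split; auto. }
  assert (Hmo1 : ord_le (mo l) rho) by (apply (proj2 (mo_spec f p e beta Hbeta l)); auto).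
  assert (Hmo2 : ord_le rho (mo l)).
  { apply ord_not_lt. intros Hlt. apply (proj1 (mo_spec f p e beta Hbeta l) A).
    apply cylset_rprefix, agree_refl. apply NNPP. intros H. apply (ord_le_lt_false rho (mo l)); auto. }
  assert (HmL : monoL l).
  { unfold monoL, mono. destruct HC0 as [E|E]; subst C0; [left|right]; intros z [Hz1 Hz2];
    (apply HC; [eapply deriv_mono; eauto|
    apply HN1; apply cylset_rprefix in Hz2; eapply agree_le; [|exact Hz2]; unfold n; lia]). }
  assert (Hok := Y_inv l ltac:(unfold l; rewrite rprefix_length; unfold n; lia)).
  unfold sigma in Hok. unfold l in Hok at 1. rewrite top_rprefix in Hok by (unfold n; lia).
  assert (Hyl : Y l = y) by (apply Hstab; unfold n; lia).
  rewrite Hyl in Hok. destruct Hok as [_ Hok]. destruct (Hok HmL) as [HA HB].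
  assert (HAr : region (mo l) l A).
  { split. eapply deriv_mono; eauto. apply cylset_rprefix, agree_refl. }
  split; intros Hf.
  - apply HA. exists A; split; auto.
  - apply HB. exists A; split; auto.
Qed.

End Build.
Open Scope R_scope.

Lemma rev_prefix A r : rev (prefix A r) = rprefix A r.
Proof.
  induction r; [reflexivity|]. unfold prefix in *. rewrite seq_S, map_app, rev_app_distr, IHr.
  reflexivity.
Qed.

Lemma rank_tt1 f g (Hf : Baire1 f) (Hg : Baire1 g) rf rg :
  is_rank f rf -> is_rank g rg -> ord_le rf rg -> tt1 f g.
Proof.
  intros Hrf Hrg Hle p e He.
  destruct (succ_alpha f Hf p e He) as [b [[x Hx] Hb]].
  assert (Hn : ~ ord_le rg b).
  { intros H. destruct (alpha_exists f Hf p e He) as [a Ha].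
    apply (proj1 Ha x). eapply deriv_mono; [|exact Hx].
    eapply ord_le_trans; [apply (proj1 Hrf p e a He Ha)|]. eapply ord_le_trans; eauto. }
  destruct (find_qd g b rg Hrg Hg Hn) as [q0 [d0 [Hd0 [y0 Hy0]]]].
  destruct (modify_qd g q0 d0 b y0 Hd0 Hy0) as [q [d [Hd [Hy Hcol]]]].
  destruct (top_r f p e b Hb) as [r Hr].
  exists (kf f g p e q d y0 r), q, d, r,
    (fun s bb => xorb (sgn f g p e q d y0 (rev s)) bb).
  split; [eapply kf_cont; eauto|]. split; auto.
  intros A bb Hc. rewrite rev_prefix.
  destruct (kf_correct f g p e q d b Hb y0 Hy Hcol r Hr A) as [HA HB].
  pose proof (Q2R_pos e He) as He'. pose proof (Q2R_pos d Hd) as Hd'.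
  destruct (Rlt_le_dec (f A) (Q2R p + Q2R e)) as [H1|H1].
  - destruct (Rlt_le_dec (Q2R p - Q2R e) (f A)) as [H2|H2].
    + destruct (xorb _ bb); [left|right]; split; auto.
    + specialize (HB H2). unfold XB, GA, GB in HB.
      destruct (sgn _ _ _ _ _ _ _ _); destruct Hc as [[E Hc]|[E Hc]]; subst bb; simpl;
        try (left; split; auto; lra); exfalso; lra.
  - specialize (HA H1). unfold XA, GA, GB in HA.
    destruct (sgn _ _ _ _ _ _ _ _); destruct Hc as [[E Hc]|[E Hc]]; subst bb; simpl;
      try (right; split; auto; lra); exfalso; lra.
Qed.

Theorem mainTheorem4 (f g : Cantor -> R) (Hf : Baire1 f) (Hg : Baire1 g) :
  exists rf rg : Ord,
    is_rank f rf /\ is_rank g rg /\ (tt1 f g <-> ord_le rf rg).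
Proof.
  destruct (rank_exists f Hf) as [rf Hrf]. destruct (rank_exists g Hg) as [rg Hrg].
  exists rf, rg. split; auto. split; auto. split.
  - apply tt1_rank; auto.
  - apply rank_tt1; auto.
Qed.
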